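(* Let $\mathbb{A}\colon\mathbb{R}^d\to\mathbb{R}^d$ be Lipschitz continuous and let $T>0$, $X_0\in\mathbb{R}^d$. Then there is a unique $(X,Z)\in\mathcal{C}^1([0,T),\mathbb{R}^{2d})$ with $X(0)=X_0$, $Z(0)=0$ satisfying, for all $t\in(0,T)$, \[ \dot X(t)=-Z(t)-\mathbb{A}(X(t)),\qquad \dot Z(t)=-\frac{1}{T-t}Z(t)-\frac{1}{T-t}\mathbb{A}(X(t)). \] *)

(* Defs.v *)
From HB Require Import structures.
From mathcomp Require Import all_boot all_order all_algebra.
From mathcomp Require Import all_classical all_reals all_analysis.
Set Implicit Arguments. Unset Strict Implicit. Unset Printing Implicit Defensive.
Import Order.TTheory GRing.Theory Num.Theory.
Import numFieldNormedType.Exports.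
Local Open Scope classical_set_scope.
Local Open Scope ring_scope.

(* Lipschitz continuity of a map R^d -> R^d (any norm; all are equivalent in
   finite dimension). *)
Definition lipschitz_map (R : realType) (d : nat) (A : 'rV[R]_d -> 'rV[R]_d) :=
  exists k : R, forall x y, `|A x - A y| <= k * `|x - y|.

(* f belongs to C^1([0,T), V): f is continuous on [0,T), differentiable on
   (0,T) with derivative continuous on (0,T) and having a (finite) limit at
   0+ (i.e. the derivative extends continuously to [0,T); equivalently f has a
   right derivative at 0 and f' is continuous on [0,T)). *)
Definition C1_on_0T (R : realType) (V : normedModType R) (T : R) (f : R -> V) :=
  [/\ {within `[0, T[, continuous f},
      (forall t, 0 < t < T -> derivable f t 1),
      {in `]0, T[, continuous (derive1 f)} &
      cvg ((derive1 f) t @[t --> 0^'+])].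

Definition solves_system (R : realType) (d : nat) (A : 'rV[R]_d -> 'rV[R]_d)
    (T : R) (X0 : 'rV[R]_d) (X Z : R -> 'rV[R]_d) :=
  [/\ C1_on_0T T X, C1_on_0T T Z, X 0 = X0, Z 0 = 0 &
      forall t, 0 < t < T ->
        derive1 X t = - Z t - A (X t) /\
        derive1 Z t = - ((T - t)^-1 *: Z t) - (T - t)^-1 *: A (X t)].

(* Main.v *)
Require Import Defs.
From HB Require Import structures.
From mathcomp Require Import all_boot all_order all_algebra.
From mathcomp Require Import all_classical all_reals all_analysis.
From mathcomp Require Import ring lra.
Import Order.TTheory GRing.Theory Num.Theory.
Import numFieldNormedType.Exports.
Local Open Scope classical_set_scope.
Local Open Scope ring_scope.

Section S.
Context {R : realType}.

Lemma mx_entry_le m n (M : 'M[R]_(m,n)) i j : `|M i j| <= `|M|.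
Proof.
rewrite [leRHS]/Num.Def.normr/= mx_normrE.
by apply: le_trans; last exact: (le_bigmax _ _ (i, j)).
Qed.

Lemma mx_norm_le m n (M : 'M[R]_(m,n)) c : 0 <= c -> (forall i j, `|M i j| <= c) -> `|M| <= c.
Proof.
move=> c0 H; rewrite [leLHS]/Num.Def.normr/= mx_normrE (bigmax_le _ c0)//= => -[i j] _; exact: H.
Qed.

Lemma cvg_mx_entries {T} (F : set_system T) {FF : Filter F} m n (f : T -> 'M[R]_(m,n)) (l : 'M[R]_(m,n)) :
  (forall i j, (fun x => f x i j) @ F --> l i j) -> f @ F --> l.
Proof.
move=> H; apply/cvgrPdist_le => /= e e0.
have : \forall x \near F, forall ij : 'I_m * 'I_n, `|l ij.1 ij.2 - f x ij.1 ij.2| <= e.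
  apply: filter_forall => -[i j]; exact: ((cvgrPdist_le _ _).1 (H i j)).
apply: filterS => x Hx.
apply: mx_norm_le; first exact: ltW.
by move=> i j; rewrite !mxE; exact: (Hx (i, j)).
Qed.
End S.
Arguments mx_entry_le {R m n} M i j.
Section S2.
Context {R : realType}.
Notation mu := (@lebesgue_measure R).

Lemma derive_expK (K s : R) : derivable (fun s => expR (K * s) / K) s 1 /\
   derive1 (fun s => expR (K * s) / K) s = expR (K * s) * K / K.
Proof.
have dK : derivable (fun s : R => K * s) s 1.
  by apply: ex_derive; apply: is_deriveZ.
have dE : derivable (@expR R) (K * s) 1 by exact: derivable_expR.
have dc : derivable ((@expR R) \o (fun s : R => K * s)) s 1.
  apply/derivable1_diffP; apply: differentiable_comp; exact/derivable1_diffP.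
split.
  rewrite /=. under eq_fun do rewrite mulrC. 
  by apply: ex_derive; apply: is_deriveZ; apply: derivableP.
rewrite derive1E.
rewrite (_ : (fun s => expR (K * s) / K) = K^-1 \*: ((@expR R) \o ( *%R K))); last first.
  by apply/funext => x /=; rewrite mulrC.
rewrite (deriveZ K^-1 dc) -derive1E (derive1_comp dK dE).
have eE : 'D_1 expR (K * s) = expR (K * s).
  by have /(congr1 (fun f => f (K * s))) := @derive_expR R.
rewrite !derive1E eE (_ : 'D_1 ( *%R K) s = K).
  by rewrite /GRing.scale/= mulrC.
have H := is_deriveZ K (@is_derive_id _ _ s 1).
have -> : ( *%R K) = (K \*: id :> R -> R) by apply/funext.
rewrite (@derive_val _ _ _ _ _ _ _ H).
by rewrite /GRing.scale/= mulr1.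
Qed.

Lemma continuous_expK (K : R) : continuous (fun s : R => expR (K * s)).
Proof.
move=> x; apply: (@continuous_comp _ _ _ ( *%R K) expR); last exact: continuous_expR.
exact: mulrl_continuous.
Qed.

Lemma int_exp (K t : R) : 0 < K -> 0 <= t ->
  \int[mu]_(s in `[0, t]) expR (K * s) = (expR (K * t) - 1) / K.
Proof.
move=> K0; rewrite le_eqVlt => /predU1P[<-|t0].
  by rewrite set_itv1 Rintegral_set1 mulr0 expR0 subrr mul0r.
have dF := derive_expK K.
rewrite /Rintegral (@continuous_FTC2 R (fun s => expR (K * s)) (fun s => expR (K * s) / K) 0 t t0).
- by rewrite -EFinB /= mulr0 expR0 mulrBl.
- by apply: continuous_subspaceT; exact: continuous_expK.
- split.
  + by move=> x _; case: (dF x).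
  + apply: cvg_at_right_filter; apply: cvgM; [exact: continuous_expK| exact: cvg_cst].
  + apply: cvg_at_left_filter; apply: cvgM; [exact: continuous_expK| exact: cvg_cst].
- move=> x _; case: (dF x) => _ ->; by rewrite mulfK// gt_eqF.
Qed.
End S2.

Section Picard.
Context {R : realType} {n : nat}.
Notation mu := (@lebesgue_measure R).
Variables (F : R -> 'rV[R]_n -> 'rV[R]_n) (y0 : 'rV[R]_n) (b L : R).
Hypothesis L0 : 0 < L.
Hypothesis FL : forall s y y', 0 <= s <= b -> `|F s y - F s y'| <= L * `|y - y'|.
Hypothesis FC : forall (G : set_system R), Filter G -> forall (x : R -> 'rV[R]_n) t,
  0 <= t <= b -> ((fun s => s) @ G --> t) -> x @ G --> x t ->
  (fun s => F s (x s)) @ G --> F t (x t).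

Definition gx (x : R -> 'rV[R]_n) j s := F s (x s) 0 j.
Definition Phi (x : R -> 'rV[R]_n) t : 'rV[R]_n :=
  y0 + \row_j \int[mu]_(s in `[0, t]) gx x j s.

Lemma wc_int (h : R -> R) t : {within `[0, t], continuous h} ->
  mu.-integrable `[0, t] (EFin \o h).
Proof. by move=> ch; apply: continuous_compact_integrable => //; exact: segment_compact. Qed.

Lemma gx_wc x j : {within `[0, b], continuous x} -> {within `[0, b], continuous (gx x j)}.
Proof.
move=> /subspace_continuousP cx; apply/subspace_continuousP => s sb.
apply: (@continuous_cvg _ _ _ _ _ (fun s => F s (x s)) (fun M : 'rV[R]_n => M 0 j)).
  exact: coord_continuous.
apply: FC => //; last exact: cx.

by apply: cvg_within_filter; exact: cvg_id.
Qed.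

Lemma gx_int x j t : 0 <= t <= b -> {within `[0, b], continuous x} ->
  mu.-integrable `[0, t] (EFin \o gx x j).
Proof.
move=> /andP[t0 tb] cx; apply: wc_int.
apply: continuous_subspaceW (gx_wc x j cx).
by apply: subset_itvl; rewrite bnd_simp.
Qed.


Lemma gx_wct x j t : 0 <= t <= b -> {within `[0, b], continuous x} ->
  {within `[0, t], continuous (gx x j)}.
Proof.
move=> /andP[t0 tb] cx; apply: continuous_subspaceW (gx_wc x j cx).
by apply: subset_itvl; rewrite bnd_simp.
Qed.

Lemma wc_norm (A : set R) (h : R -> R) : {within A, continuous h} ->
  {within A, continuous (fun s => `|h s|)}.
Proof.
move=> /subspace_continuousP ch; apply/subspace_continuousP => s As.
exact: cvg_norm (ch s As).
Qed.

Lemma Phi_contr x y C t : {within `[0, b], continuous x} ->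
  {within `[0, b], continuous y} ->
  (forall s, 0 <= s <= b -> `|x s - y s| <= C * expR (2 * L * s)) ->
  0 <= t <= b -> `|Phi x t - Phi y t| <= C / 2 * expR (2 * L * t).
Proof.
move=> cx cy H tb; have /andP[t0 tb'] := tb.
have b0 : 0 <= b by apply: le_trans tb'.
have C0 : 0 <= C.
  have := H 0; rewrite lexx b0 mulr0 expR0 mulr1 => /(_ isT).
  by apply: le_trans.
apply: mx_norm_le; first by rewrite mulr_ge0 ?divr_ge0// expR_ge0.
move=> i j; rewrite /Phi !mxE.
have -> : forall a c e : R, a + c - (a + e) = c - e by move=> *; ring.
have ix := gx_int x j t tb cx; have iy := gx_int y j t tb cy.
rewrite -RintegralB//.
have cxy : {within `[0, t], continuous (fun s => gx x j s - gx y j s)}.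
  exact: within_continuousB (gx_wct x j t tb cx) (gx_wct y j t tb cy).
apply: le_trans.
  apply: le_normr_Rintegral => //; exact: wc_int cxy.
have ce : continuous (fun s : R => L * C * expR (2 * L * s)).
  by move=> s; apply: cvgM; [exact: cvg_cst| exact: continuous_expK].
apply: (@le_trans _ _ (\int[mu]_(s in `[0, t]) (L * C * expR (2 * L * s)))).
  apply: le_Rintegral => //.
  - apply: wc_int; apply: wc_norm; exact: cxy.
  - exact: wc_int (continuous_subspaceT ce).
  move=> s /=; rewrite in_itv /= => /andP[s0 st].
  have sb : 0 <= s <= b by rewrite s0 (le_trans st tb').
  have -> : gx x j s - gx y j s = (F s (x s) - F s (y s)) 0 j by rewrite !mxE.
  apply: le_trans; first exact: mx_entry_le.
  apply: le_trans; first exact: FL.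
  by rewrite -mulrA ler_wpM2l ?(ltW L0)// H.
rewrite RintegralZl //; last by apply: wc_int; apply: continuous_subspaceT; exact: continuous_expK.
rewrite int_exp ?mulr_gt0//.
set e := expR _.
have -> : L * C * ((e - 1) / (2 * L)) = C / 2 * (e - 1).
  by field; rewrite gt_eqF.
by apply: ler_wpM2l; [rewrite divr_ge0 | lra].
Qed.

Lemma Phi_wc x : 0 <= b -> {within `[0, b], continuous x} ->
  {within `[0, b], continuous (Phi x)}.
Proof.
move=> b0 cx; apply/subspace_continuousP => s sb.
apply: cvgD; first exact: cvg_cst.
apply: cvg_mx_entries => i j.
have -> : (fun t => (\row_j \int[mu]_(s in `[0, t]) gx x j s) i j) =
    (fun t => parameterized_integral mu 0 t (gx x j)).
  by apply/funext => t; rewrite mxE.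
rewrite mxE.
have := @parameterized_integral_continuous R 0 b (gx x j) b0.
move=> /(_ (gx_int x j b _ cx)); rewrite lexx b0 => /(_ isT).
by move=> /subspace_continuousP; apply.
Qed.

Lemma wc_normV (A : set R) (h : R -> 'rV[R]_n) : {within A, continuous h} ->
  {within A, continuous (fun s => `|h s|)}.
Proof.
move=> /subspace_continuousP ch; apply/subspace_continuousP => s As.
exact: cvg_norm (ch s As).
Qed.

Lemma bound_exp (u v : R -> 'rV[R]_n) : 0 <= b ->
  {within `[0, b], continuous u} -> {within `[0, b], continuous v} ->
  exists2 C, 0 <= C & forall s, 0 <= s <= b -> `|u s - v s| <= C * expR (2 * L * s).
Proof.
move=> b0 cu cv.
have cuv := wc_normV _ _ (within_continuousB cu cv : {within `[0, b], continuous (fun s => u s - v s)}).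
have [c cb Hc] := EVT_max b0 cuv.
exists `|u c - v c| => // s sb.
have /Hc : s \in `[0, b] by rewrite in_itv.
move=> /le_trans; apply.
rewrite ler_peMr// -expR0 ler_expR; apply: mulr_ge0.
  by rewrite mulr_ge0// ltW.
by case/andP: sb.
Qed.

Lemma geo_small (D e : R) : 0 < e -> \forall N \near \oo, D * (2^-1) ^+ N < e.
Proof.
move=> e0; have := @cvg_geometric R D (2^-1).
rewrite ger0_norm ?invr_ge0// invf_lt1 ?ltr1n// => /(_ isT) /cvgr_lt /(_ e e0).
by [].
Qed.

Lemma le_geo0 (a D : R) : (forall k, a <= D * (2^-1) ^+ k) -> a <= 0.
Proof.
move=> H; have := @cvg_geometric R D (2^-1).
rewrite ger0_norm ?invr_ge0// invf_lt1 ?ltr1n// => /(_ isT) /cvgr_to_ge; apply.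
by apply: nearW => k; exact: H.
Qed.

Lemma Phi_derive x t : 0 < t < b -> {within `[0, b], continuous x} ->
  derivable (Phi x) t 1 /\ derive1 (Phi x) t = F t (x t).
Proof.
move=> /andP[t0 tb] cx.
have b0 : 0 < b by apply: lt_trans tb.
have ct : {for t, continuous x}.
  by apply: (within_continuous_continuous b0 cx); rewrite in_itv /= t0 tb.
have tb' : 0 <= t <= b by rewrite (ltW t0) (ltW tb).
have cg j : {for t, continuous (gx x j)}.
  apply: (@continuous_cvg _ _ _ _ _ (fun s => F s (x s)) (fun M : 'rV[R]_n => M 0 j)).
    exact: coord_continuous.
  by apply: FC => //; exact: cvg_id.
have ig j : mu.-integrable `[0, b] (EFin \o gx x j) by apply: gx_int => //; rewrite lexx ltW.
have D j := @continuous_FTC1_closed R (gx x j) 0 t b tb (ig j) t0 (cg j).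
have Phi_ij i j : (fun s => Phi x s i j) =
    cst (y0 i j) + (fun s => \int[mu]_(u in `[0, s]) gx x j u).
  by apply/funext => s; rewrite /Phi !mxE.
have dij i j : derivable (fun s => Phi x s i j) t 1.
  by rewrite Phi_ij; apply: derivableD; [exact: derivable_cst | case: (D j)].
have dP : derivable (Phi x) t 1 by apply/derivable_mxP.
split => //.
rewrite derive1E derive_mx//; apply/matrixP => i j; rewrite !mxE Phi_ij deriveD.
- rewrite derive_cst add0r -derive1E; case: (D j) => _ ->.
  by rewrite /gx (ord1 i).
- exact: derivable_cst.
- by case: (D j).
Qed.

Lemma ode_fix Y : {within `[0, b], continuous Y} -> Y 0 = y0 ->
  (forall s, 0 < s < b -> derivable Y s 1 /\ derive1 Y s = F s (Y s)) ->
  forall t, 0 <= t <= b -> Phi Y t = Y t.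
Proof.
move=> cY Y0 dY t tb; have /andP[t0 tb'] := tb.
move: t0; rewrite le_eqVlt => /predU1P[<-|t0].
  rewrite /Phi Y0; apply/matrixP => i j; rewrite !mxE.
  by rewrite set_itv1 Rintegral_set1 addr0.
apply/matrixP => i j; rewrite /Phi !mxE.
have cYt : {within `[0, t], continuous Y}.
  by apply: continuous_subspaceW cY; apply: subset_itvl; rewrite bnd_simp.
have [_ Yl Yr] := (continuous_within_itvP _ t0).1 cYt.
rewrite /Rintegral (@continuous_FTC2 R (gx Y j) (fun s => Y s i j) 0 t t0).
- by rewrite -EFinB /= Y0 addrC subrK.
- exact: gx_wct.
- split.
  + move=> s; rewrite in_itv /= => /andP[s0 st].
    have sb : 0 < s < b by rewrite s0 (lt_le_trans st tb').
    have [dYs _] := dY s sb.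
    by move/derivable_mxP : dYs; apply.
  + apply: (@continuous_cvg _ _ _ _ _ Y (fun M : 'rV[R]_n => M i j)) => //.
    exact: coord_continuous.
  + apply: (@continuous_cvg _ _ _ _ _ Y (fun M : 'rV[R]_n => M i j)) => //.
    exact: coord_continuous.
- move=> s; rewrite in_itv /= => /andP[s0 st].
  have sb : 0 < s < b by rewrite s0 (lt_le_trans st tb').
  have [dYs eYs] := dY s sb.
  rewrite derive1E.
  have E := derive_mx dYs.
  have := congr1 (fun M : 'rV[R]_n => M i j) E; rewrite /= mxE => <-.
  by rewrite -derive1E eYs /gx (ord1 i).
Qed.

Definition xs k := iter k Phi (fun _ => y0).

Definition xl s := lim (xs k s @[k --> \oo]).

Section Iter.
Hypothesis b0 : 0 <= b.

Lemma xs_wc k : {within `[0, b], continuous (xs k)}.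
Proof.
elim: k => [|k IH]; first by apply: continuous_subspaceT => ?; exact: cvg_cst.
exact: Phi_wc b0 IH.
Qed.

Variables (C0 : R).
Hypothesis C00 : 0 <= C0.
Hypothesis HC0 : forall s, 0 <= s <= b -> `|xs 1 s - xs 0 s| <= C0 * expR (2 * L * s).

Lemma xs_bnd0 k s : 0 <= s <= b -> `|xs k s - xs 0 s| <= 2 * C0 * expR (2 * L * s).
Proof.
elim: k s => [|k IH] s sb.
  by rewrite subrr normr0 mulr_ge0 ?mulr_ge0 ?expR_ge0.
have -> : xs k.+1 s - xs 0 s = (Phi (xs k) s - xs 1 s) + (xs 1 s - xs 0 s).
  by rewrite addrA subrK.
apply: le_trans; first exact: ler_normD.
have := Phi_contr (xs k) (xs 0) _ s (xs_wc k) (xs_wc 0) IH sb.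
move=> /lerD /(_ (HC0 s sb)) /le_trans; apply.
by rewrite le_eqVlt; apply/orP; left; apply/eqP; field.
Qed.

Lemma xs_cauchy k m s : 0 <= s <= b ->
  `|xs (k + m) s - xs k s| <= 2 * C0 * (2^-1) ^+ k * expR (2 * L * s).
Proof.
elim: k s => [|k IH] s sb.
  by rewrite add0n expr0 mulr1; exact: xs_bnd0.
rewrite addSn.
have := Phi_contr (xs (k + m)) (xs k) _ s (xs_wc (k + m)) (xs_wc k) IH sb.
move=> /le_trans; apply.
by rewrite le_eqVlt; apply/orP; left; apply/eqP; rewrite exprS; field.
Qed.

Lemma xs_cvg s : 0 <= s <= b -> cvgn (fun k => xs k s).
Proof.
move=> sb; apply/cauchy_cvgP; apply: cauchy_exP => e e0.
have [N _ HN] := geo_small (2 * C0 * expR (2 * L * b)) e e0.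
have {}HN := HN N (leqnn N).
exists (xs N s); exists N => // k /= Nk.
rewrite -ball_normE /ball_ /= distrC -(subnKC Nk).
apply: le_lt_trans (xs_cauchy _ _ _ sb) _.
apply: le_lt_trans HN.
rewrite [X in _ <= X]mulrAC ler_wpM2l ?mulr_ge0 ?exprn_ge0 ?invr_ge0// ler_expR.
case/andP: sb => s0 sb.
by rewrite ler_wpM2l// mulr_ge0// ltW.
Qed.

Lemma xl_bnd k s : 0 <= s <= b ->
  `|xl s - xs k s| <= 2 * C0 * (2^-1) ^+ k * expR (2 * L * s).
Proof.
move=> sb; have cv := xs_cvg s sb.
apply: (@cvgr_to_le nat \oo _ R (fun m => `|xs m s - xs k s|)).
  by apply: cvg_norm; apply: cvgB; [exact: cv | exact: cvg_cst].
exists k => // m /= km; rewrite -(subnKC km); exact: xs_cauchy.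
Qed.

Lemma xl_wc : {within `[0, b], continuous xl}.
Proof.
apply/subspace_continuousP => s sb; apply/cvgrPdist_lt => e e0.
have e30 : 0 < e / 3 by rewrite divr_gt0.
have [N _ HN] := geo_small (2 * C0 * expR (2 * L * b)) (e / 3) e30.
have {}HN := HN N (leqnn N).
have bnd : forall t, 0 <= t <= b -> `|xl t - xs N t| < e / 3.
  move=> t tb; apply: le_lt_trans (xl_bnd N t tb) _; apply: le_lt_trans HN.
  rewrite [X in _ <= X]mulrAC ler_wpM2l ?mulr_ge0 ?exprn_ge0 ?invr_ge0// ler_expR.
  case/andP: tb => t0 tb.
  by rewrite ler_wpM2l// mulr_ge0// ltW.
have /subspace_continuousP /(_ s sb) cN := xs_wc N.
have Hc : \forall t \near within `[0, b] (nbhs s), `|xs N s - xs N t| < e / 3.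
  by move/cvgrPdist_lt : cN => /(_ _ e30).
have Hw : \forall t \near within `[0, b] (nbhs s), (`[0, b]%classic : set R) t.
  by apply: (within_nbhsW sb) => t.
near=> t.
rewrite /from_subspace.
have tb : (`[0, b]%classic : set R) t by near: t; exact: Hw.
have Ht : `|xs N s - xs N t| < e / 3.
  by near: t.
have tb' : 0 <= t <= b by move: tb; rewrite /= in_itv.
have -> : xl s - xl t = (xl s - xs N s) + (xs N s - xs N t) + (xs N t - xl t).
  by rewrite !addrA !subrK.
apply: (@lt_le_trans _ _ (e / 3 + e / 3 + e / 3)).
  2: by rewrite le_eqVlt; apply/orP; left; apply/eqP; field.
apply: le_lt_trans; first exact: ler_normD.
rewrite ltrD//; last by rewrite distrC; exact: bnd.
apply: le_lt_trans; first exact: ler_normD.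
by rewrite ltrD//; exact: bnd.
Unshelve. all: by end_near.
Qed.

Lemma xl_fix t : 0 <= t <= b -> Phi xl t = xl t.
Proof.
move=> tb; apply/eqP; rewrite -subr_eq0 -normr_le0.
apply: (le_geo0 _ (2 * C0 * expR (2 * L * t))) => k.
have -> : Phi xl t - xl t = (Phi xl t - Phi (xs k) t) + (xs k.+1 t - xl t).
  by rewrite addrA subrK.
apply: le_trans; first exact: ler_normD.
have h1 := Phi_contr xl (xs k) _ t xl_wc (xs_wc k) (fun s sb => xl_bnd k s sb) tb.
have h2 := xl_bnd k.+1 t tb; rewrite distrC in h2.
apply: le_trans (lerD h1 h2) _.
by rewrite le_eqVlt; apply/orP; left; apply/eqP; rewrite exprS; field.
Qed.

Lemma xl_near t : 0 < t < b -> \forall s \near t, Phi xl s = xl s.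
Proof.
move=> tb; have : t \in `]0, b[ by rewrite in_itv.
move=> /near_in_itvoo; apply: filterS => s; rewrite in_itv /= => /andP[s0 sb].
by apply: xl_fix; rewrite (ltW s0) (ltW sb).
Qed.

Lemma xl_derive t : 0 < t < b -> derivable xl t 1 /\ derive1 xl t = F t (xl t).
Proof.
move=> tb; have Hn := xl_near t tb.
have [dP eP] := Phi_derive xl t tb xl_wc.
split; first exact: (near_eq_derivable Hn dP).
by rewrite derive1E -(near_eq_derive _ Hn) -derive1E.
Qed.

Lemma xl_uniq Y : {within `[0, b], continuous Y} ->
  (forall t, 0 <= t <= b -> Phi Y t = Y t) ->
  forall t, 0 <= t <= b -> Y t = xl t.
Proof.
move=> cY fY.
have [C C0' HC] := bound_exp Y xl b0 cY xl_wc.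
have H : forall k s, 0 <= s <= b ->
    `|Y s - xl s| <= C * (2^-1) ^+ k * expR (2 * L * s).
  elim=> [|k IH] s sb; first by rewrite expr0 mulr1; exact: HC.
  rewrite -(fY s sb) -(xl_fix s sb).
  apply: le_trans (Phi_contr Y xl _ s cY xl_wc IH sb) _.
  by rewrite le_eqVlt; apply/orP; left; apply/eqP; rewrite exprS; field.
move=> t tb; apply/eqP; rewrite -subr_eq0 -normr_le0.
apply: (le_geo0 _ (C * expR (2 * L * t))) => k.
by rewrite mulrAC; exact: H.
Qed.

End Iter.

End Picard.

Lemma Phi0 {R : realType} {n : nat} (F : R -> 'rV[R]_n -> 'rV[R]_n) y0 x :
  Phi F y0 x 0 = y0.
Proof.
apply/matrixP => i j; rewrite /Phi !mxE.
by rewrite set_itv1 Rintegral_set1 addr0.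
Qed.

Lemma pic_pack {R : realType} {n : nat} (F : R -> 'rV[R]_n -> 'rV[R]_n) y0 b L :
  0 < L ->
  (forall s y y', 0 <= s <= b -> `|F s y - F s y'| <= L * `|y - y'|) ->
  (forall (G : set_system R), Filter G -> forall (x : R -> 'rV[R]_n) t,
    0 <= t <= b -> ((fun s => s) @ G --> t) -> x @ G --> x t ->
    (fun s => F s (x s)) @ G --> F t (x t)) ->
  0 <= b ->
  [/\ {within `[0, b], continuous (xl F y0)},
      (forall t, 0 < t < b -> derivable (xl F y0) t 1 /\ derive1 (xl F y0) t = F t (xl F y0 t)),
      xl F y0 0 = y0 &
      (forall Y, {within `[0, b], continuous Y} -> Y 0 = y0 ->
        (forall s, 0 < s < b -> derivable Y s 1 /\ derive1 Y s = F s (Y s)) ->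
        forall t, 0 <= t <= b -> Y t = xl F y0 t)].
Proof.
move=> L0 FL FC b0.
have [C0 C00 HC0] := bound_exp b L L0 (xs F y0 1) (xs F y0 0) b0
  (xs_wc F y0 b FC b0 1) (xs_wc F y0 b FC b0 0).
split.
- exact: (xl_wc F y0 b L L0 FL FC b0 C0 C00 HC0).
- exact: (xl_derive F y0 b L L0 FL FC b0 C0 C00 HC0).
- have := xl_fix F y0 b L L0 FL FC b0 C0 C00 HC0 0; rewrite lexx b0 Phi0 => /(_ isT).
  by move=> <-.
- move=> Y cY Y0 dY t tb.
  apply: (xl_uniq F y0 b L L0 FL FC b0 C0 C00 HC0 Y cY) => //.
  exact: ode_fix.
Qed.

Section Conc.
Context {R : realType} {d : nat}.
Variables (A : 'rV[R]_d -> 'rV[R]_d) (T : R) (X0 : 'rV[R]_d) (k : R).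
Hypothesis Ak : forall x y, `|A x - A y| <= k * `|x - y|.
Hypothesis T0 : 0 < T.

Definition Fc (s : R) (y : 'rV[R]_(d + d)) : 'rV[R]_(d + d) :=
  row_mx (- rsubmx y - A (lsubmx y))
         (- ((T - s)^-1 *: rsubmx y) - (T - s)^-1 *: A (lsubmx y)).

Lemma A_lip x y : `|A x - A y| <= `|k| * `|x - y|.
Proof. by apply: le_trans (Ak x y) _; rewrite ler_wpM2r// ler_norm. Qed.

Lemma A_cont : continuous A.
Proof.
move=> x; have FF : ProperFilter (nbhs x) by exact: nbhs_pfilter.
apply/cvgrPdist_lt => e e0.
have e1 : 0 < e / (`|k| + 1) by rewrite divr_gt0// ltr_pwDr.
near=> y.
have Hy : `|x - y| < e / (`|k| + 1).
  near: y; apply: cvgr_dist_lt => //; exact: cvg_id.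
apply: le_lt_trans (A_lip x y) _.
apply: (@le_lt_trans _ _ ((`|k| + 1) * `|x - y|)).
  by rewrite ler_wpM2r// lerDl.
by rewrite mulrC -ltr_pdivlMr// ltr_pwDr.
Unshelve. all: by end_near.
Qed.

Lemma lsub_le (y y' : 'rV[R]_(d + d)) : `|lsubmx y - lsubmx y'| <= `|y - y'|.
Proof.
apply: mx_norm_le => // i j; rewrite !mxE.
have := mx_entry_le (y - y') i (lshift d j); by rewrite !mxE.
Qed.

Lemma rsub_le (y y' : 'rV[R]_(d + d)) : `|rsubmx y - rsubmx y'| <= `|y - y'|.
Proof.
apply: mx_norm_le => // i j; rewrite !mxE.
have := mx_entry_le (y - y') i (rshift d j); by rewrite !mxE.
Qed.

Lemma row_le (a c : 'rV[R]_d) B : `|a| <= B -> `|c| <= B -> `|row_mx a c| <= B.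
Proof.
move=> aB cB; apply: mx_norm_le; first exact: le_trans aB.
move=> i j; case: (split_ordP j) => j' ->; [rewrite row_mxEl | rewrite row_mxEr].
  exact: le_trans (mx_entry_le _ _ _) aB.
exact: le_trans (mx_entry_le _ _ _) cB.
Qed.

Lemma cvg_row_mx {U} (G : set_system U) {FG : Filter G} (a c : U -> 'rV[R]_d) (la lc : 'rV[R]_d) :
  a @ G --> la -> c @ G --> lc -> (fun u => row_mx (a u) (c u)) @ G --> row_mx la lc.
Proof.
move=> ca cc; apply: cvg_mx_entries => i j.
case: (split_ordP j) => j' ->; rewrite ?row_mxEl ?row_mxEr.
- have -> : (fun u => row_mx (a u) (c u) i (lshift d j')) = (fun u => a u i j').
    by apply/funext => u; rewrite row_mxEl.
  apply: (@continuous_cvg _ _ _ _ _ a (fun M : 'rV[R]_d => M i j')) => //.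
  exact: coord_continuous.
- have -> : (fun u => row_mx (a u) (c u) i (rshift d j')) = (fun u => c u i j').
    by apply/funext => u; rewrite row_mxEr.
  apply: (@continuous_cvg _ _ _ _ _ c (fun M : 'rV[R]_d => M i j')) => //.
  exact: coord_continuous.
Qed.

Lemma FCc (G : set_system R) : Filter G -> forall (x : R -> 'rV[R]_(d + d)) t,
  t < T -> ((fun s => s) @ G --> t) -> x @ G --> x t ->
  (fun s => Fc s (x s)) @ G --> Fc t (x t).
Proof.
move=> FG x t tT ct cx.
have cz : (fun s => rsubmx (x s)) @ G --> rsubmx (x t).
  apply: (@continuous_cvg _ _ _ _ _ x (@rsubmx R 1 d d)); [exact: continuous_rsubmx | exact: cx].
have cl : (fun s => lsubmx (x s)) @ G --> lsubmx (x t).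
  apply: (@continuous_cvg _ _ _ _ _ x (@lsubmx R 1 d d)); [exact: continuous_lsubmx | exact: cx].
have cA : (fun s => A (lsubmx (x s))) @ G --> A (lsubmx (x t)).
  apply: (@continuous_cvg _ _ _ _ _ (fun s => lsubmx (x s)) A); [exact: A_cont | exact: cl].
have cw : (fun s => (T - s)^-1) @ G --> (T - t)^-1.
  apply: cvgV; first by rewrite subr_eq0 gt_eqF.
  by apply: cvgB; [exact: cvg_cst| exact: ct].
rewrite /Fc; apply: cvg_row_mx.
  by apply: cvgB; [exact: cvgN | exact: cA].
by apply: cvgB; [apply: cvgN; exact: cvgZ | exact: cvgZ].
Qed.

Lemma FLc b s y y' : b < T -> 0 <= s <= b ->
  `|Fc s y - Fc s y'| <= (1 + (T - b)^-1) * (1 + `|k|) * `|y - y'|.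
Proof.
move=> bT /andP[s0 sb].
have Tb : 0 < T - b by rewrite subr_gt0.
have Ts : 0 < T - s by rewrite subr_gt0 (le_lt_trans sb bT).
have w0 : 0 <= (T - s)^-1 by rewrite invr_ge0 ltW.
have wb : (T - s)^-1 <= (T - b)^-1 by rewrite lef_pV2 ?posrE// lerD2l lerN2.
have wb0 : 0 <= (T - b)^-1 by rewrite invr_ge0 ltW.
have z0 : 0 <= `|y - y'| by [].
have k0 : 0 <= `|k| by [].
have hz := rsub_le y y'.
have hA : `|A (lsubmx y) - A (lsubmx y')| <= `|k| * `|y - y'|.
  apply: le_trans (A_lip _ _) _; exact: ler_wpM2l (lsub_le y y').
rewrite /Fc opp_row_mx add_row_mx; apply: row_le.
  have -> : (- rsubmx y - A (lsubmx y)) + - (- rsubmx y' - A (lsubmx y')) =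
      - (rsubmx y - rsubmx y') - (A (lsubmx y) - A (lsubmx y')).
    by apply/matrixP => i j; rewrite !mxE; ring.
  apply: le_trans (ler_normB _ _) _; rewrite normrN.
  apply: le_trans (lerD hz hA) _.
  rewrite (_ : `|y - y'| + `|k| * `|y - y'| = 1 * (1 + `|k|) * `|y - y'|); last by ring.
  by rewrite ler_wpM2r// ler_wpM2r ?addr_ge0// lerDl.
have -> : (- ((T - s)^-1 *: rsubmx y) - (T - s)^-1 *: A (lsubmx y)) +
    - (- ((T - s)^-1 *: rsubmx y') - (T - s)^-1 *: A (lsubmx y')) =
    - ((T - s)^-1 *: ((rsubmx y - rsubmx y') + (A (lsubmx y) - A (lsubmx y')))).
  by apply/matrixP => i j; rewrite !mxE; ring.
rewrite normrN normrZ ger0_norm//.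
have := ler_normD (rsubmx y - rsubmx y') (A (lsubmx y) - A (lsubmx y')).
move=> h; have h2 := le_trans h (lerD hz hA).
have h3 := ler_wpM2l w0 h2.
apply: le_trans h3 _.
rewrite (_ : `|y - y'| + `|k| * `|y - y'| = (1 + `|k|) * `|y - y'|); last by ring.
rewrite mulrA; apply: ler_wpM2r => //; apply: ler_wpM2r; first by rewrite addr_ge0.
by apply: le_trans wb _; rewrite lerDr.
Qed.

Definition y0c : 'rV[R]_(d + d) := row_mx X0 0.
Definition Yc := xl Fc y0c.

Lemma Ypack b : 0 <= b -> b < T ->
  [/\ {within `[0, b], continuous Yc},
      (forall t, 0 < t < b -> derivable Yc t 1 /\ derive1 Yc t = Fc t (Yc t)),
      Yc 0 = y0c &
      (forall Y, {within `[0, b], continuous Y} -> Y 0 = y0c ->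
        (forall s, 0 < s < b -> derivable Y s 1 /\ derive1 Y s = Fc s (Y s)) ->
        forall t, 0 <= t <= b -> Y t = Yc t)].
Proof.
move=> b0 bT.
have L0 : 0 < (1 + (T - b)^-1) * (1 + `|k|).
  by rewrite mulr_gt0// ltr_pwDl// invr_ge0 subr_ge0 ltW.
apply: (pic_pack Fc y0c b _ L0) => //.
- by move=> s y y' sb; exact: FLc.
- move=> G FG x t /andP[_ tb]; apply: FCc => //; exact: le_lt_trans tb bT.
Qed.

Lemma Y_wc b : 0 <= b -> b < T -> {within `[0, b], continuous Yc}.
Proof. by move=> b0 bT; case: (Ypack b b0 bT). Qed.

Lemma Y0 : Yc 0 = y0c.
Proof. by case: (Ypack 0 (lexx 0) T0). Qed.

Lemma Y_der t : 0 < t < T -> derivable Yc t 1 /\ derive1 Yc t = Fc t (Yc t).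
Proof.
move=> /andP[t0 tT]; have [h1 h2] := midf_lt tT.
have b0 : 0 <= (t + T) / 2 by apply: ltW; apply: lt_trans h1.
by case: (Ypack _ b0 h2) => _ + _ _; apply; rewrite t0.
Qed.

Lemma Y_cont_at t : 0 < t < T -> {for t, continuous Yc}.
Proof.
move=> /Y_der [dY _]; apply: differentiable_continuous; exact/derivable1_diffP.
Qed.

Lemma Y_right0 : Yc @ 0^'+ --> Yc 0.
Proof.
have [h1 h2] := midf_lt T0.
rewrite add0r in h1 h2.
have [_ + _] := (continuous_within_itvP _ h1).1 (Y_wc _ (ltW h1) h2).
by [].
Qed.

Lemma Y_wT t : 0 <= t < T -> Yc @ within `[0, T[ (nbhs t) --> Yc t.
Proof.
move=> /andP[t0 tT]; have [h1 h2] := midf_lt tT.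
have b0 : 0 <= (t + T) / 2 by apply: ltW; apply: le_lt_trans h1.
have := (subspace_continuousP _ _).1 (Y_wc _ b0 h2) t.
rewrite /= in_itv /= t0 (ltW h1) => /(_ isT) H.
have Hb := lt_nbhsl h1.
apply: cvg_trans H; apply: cvg_fmap2 => P.
rewrite /within /= => HP.
apply: filterS2 HP Hb => s Hs sb; rewrite /= in_itv /= => /andP[s0 _].

by apply: Hs; rewrite /= in_itv /= s0 (ltW sb).
Qed.

Lemma der_sub (P : 'rV[R]_(d + d) -> 'rV[R]_d) (col : 'I_d -> 'I_(d + d))
  (HP : forall y i j, P y i j = y i (col j)) (Y : R -> 'rV[R]_(d + d)) t :
  derivable Y t 1 ->
  derivable (fun s => P (Y s)) t 1 /\ derive1 (fun s => P (Y s)) t = P (derive1 Y t).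
Proof.
move=> dY.
have E i j : (fun s => P (Y s) i j) = (fun s => Y s i (col j)).
  by apply/funext => s; rewrite HP.
have dP : derivable (fun s => P (Y s)) t 1.
  apply/derivable_mxP => i j; rewrite E; exact: ((derivable_mxP _ _ _).1 dY i (col j)).
split => //; rewrite !derive1E (derive_mx dP) (derive_mx dY).
by apply/matrixP => i j; rewrite HP !mxE E.
Qed.

Lemma C1_P (P : 'rV[R]_(d + d) -> 'rV[R]_d) (col : 'I_d -> 'I_(d + d))
  (HP : forall y i j, P y i j = y i (col j)) : continuous P ->
  C1_on_0T T (fun t => P (Yc t)).
Proof.
move=> cP; split.
- apply/subspace_continuousP => t; rewrite /= in_itv /= => tT.
  apply: (@continuous_cvg _ _ _ _ _ Yc P); first exact: cP.
  exact: Y_wT.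
- by move=> t tT; exact: (der_sub _ _ HP _ _ (Y_der _ tT).1).1.
- move=> t; rewrite in_itv /= => tT.
  have ne : \forall s \near t, P (Fc s (Yc s)) = derive1 (fun s => P (Yc s)) s.
    have : t \in `]0, T[ by rewrite in_itv.
    move/near_in_itvoo; apply: filterS => s; rewrite in_itv /= => sT.
    by have [dY eY] := Y_der _ sT; rewrite (der_sub _ _ HP _ _ dY).2 eY.
  rewrite /continuous_at -(nbhs_singleton ne).
  apply: cvg_trans (near_eq_cvg ne) _.
  apply: (@continuous_cvg _ _ _ _ _ (fun s => Fc s (Yc s)) P); first exact: cP.
  apply: FCc.
  + by case/andP: tT.
  + exact: cvg_id.
  + exact: Y_cont_at.
- apply/cvg_ex; exists (P (Fc 0 (Yc 0))).
  have ne : \forall s \near 0^'+, P (Fc s (Yc s)) = derive1 (fun s => P (Yc s)) s.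
    near=> s.
    have sT : 0 < s < T.
      apply/andP; split; near: s; [exact: nbhs_right_gt | exact: nbhs_right_lt].
    by have [dY eY] := Y_der _ sT; rewrite (der_sub _ _ HP _ _ dY).2 eY.
  apply: cvg_trans (near_eq_cvg ne) _.
  apply: (@continuous_cvg _ _ _ _ _ (fun s => Fc s (Yc s)) P); first exact: cP.
  apply: FCc => //.
  + by apply: cvg_at_right_filter; exact: cvg_id.
  + exact: Y_right0.
Unshelve. all: by end_near.
Qed.

Lemma der_row (X Z : R -> 'rV[R]_d) s : derivable X s 1 -> derivable Z s 1 ->
  derivable (fun s => row_mx (X s) (Z s)) s 1 /\
  derive1 (fun s => row_mx (X s) (Z s)) s = row_mx (derive1 X s) (derive1 Z s).
Proof.
move=> dX dZ.
have EL i j : (fun s => row_mx (X s) (Z s) i (lshift d j)) = (fun s => X s i j).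
  by apply/funext => u; rewrite row_mxEl.
have ER i j : (fun s => row_mx (X s) (Z s) i (rshift d j)) = (fun s => Z s i j).
  by apply/funext => u; rewrite row_mxEr.
have dY : derivable (fun s => row_mx (X s) (Z s)) s 1.
  apply/derivable_mxP => i j; case: (split_ordP j) => j' ->.
    rewrite EL; exact: ((derivable_mxP _ _ _).1 dX i j').
  rewrite ER; exact: ((derivable_mxP _ _ _).1 dZ i j').
split => //; rewrite !derive1E (derive_mx dY) (derive_mx dX) (derive_mx dZ).
apply/matrixP => i j; rewrite mxE; case: (split_ordP j) => j' ->.
  by rewrite row_mxEl mxE EL.
by rewrite row_mxEr mxE ER.
Qed.

End Conc.

Theorem theoremH1 (R : realType) (d : nat) (A : 'rV[R]_d -> 'rV[R]_d)
    (T : R) (X0 : 'rV[R]_d) :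
  lipschitz_map A -> 0 < T ->
  exists X Z : R -> 'rV[R]_d,
    solves_system A T X0 X Z /\
    forall X' Z' : R -> 'rV[R]_d, solves_system A T X0 X' Z' ->
      forall t, 0 <= t < T -> X' t = X t /\ Z' t = Z t.
Proof.
move=> [k Ak] T0.
have HPl : forall (y : 'rV[R]_(d + d)) i j, lsubmx y i j = y i (lshift d j).
  by move=> *; rewrite mxE.
have HPr : forall (y : 'rV[R]_(d + d)) i j, rsubmx y i j = y i (rshift d j).
  by move=> *; rewrite mxE.
exists (fun t => lsubmx (Yc A T X0 t)), (fun t => rsubmx (Yc A T X0 t)).
split.
  split.
  - exact: (C1_P A T X0 k Ak T0 _ _ HPl (@continuous_lsubmx _ _ _ _)).
  - exact: (C1_P A T X0 k Ak T0 _ _ HPr (@continuous_rsubmx _ _ _ _)).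
  - by rewrite (Y0 A T X0 k Ak T0) row_mxKl.
  - by rewrite (Y0 A T X0 k Ak T0) row_mxKr.
  - move=> t tT; have [dY eY] := Y_der A T X0 k Ak _ tT.
    rewrite (der_sub _ _ HPl _ _ dY).2 (der_sub _ _ HPr _ _ dY).2 eY /Fc.
    by rewrite row_mxKl row_mxKr.
move=> X' Z' [[cX dX _ _] [cZ dZ _ _] X'0 Z'0 ode] t /andP[t0 tT].
pose Y' := fun s => row_mx (X' s) (Z' s).
have HY : Y' t = Yc A T X0 t.
  case: (Ypack A T X0 k Ak _ t0 tT) => _ _ _ U; apply: (U Y' _ _ _ t); last by rewrite t0 lexx.
  - have sub : `[0, t] `<=` `[0, T[ by apply: subset_itvl; rewrite bnd_simp.
    have /subspace_continuousP cX' := continuous_subspaceW sub cX.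
    have /subspace_continuousP cZ' := continuous_subspaceW sub cZ.
    apply/subspace_continuousP => s st.
    exact: (cvg_row_mx _ _ _ _ _ (cX' s st) (cZ' s st)).
  - by rewrite /Y' X'0 Z'0.
  - move=> s /andP[s0 st].
    have sT : 0 < s < T by rewrite s0 (lt_trans st tT).
    have [eX eZ] := ode s sT.
    have [dY eY] := der_row _ _ _ (dX s sT) (dZ s sT).
    split => //; rewrite eY eX eZ /Fc /Y' row_mxKl row_mxKr.
    by [].
split.
  by have := congr1 lsubmx HY; rewrite /Y' row_mxKl.
by have := congr1 rsubmx HY; rewrite /Y' row_mxKr.
Qed.
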